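(* Let $n\ge4$ and $\sigma=(\sigma_1,\dots,\sigma_{n-2})\in\Sigma_n$. Let $\mathbf A\in\mathcal G_n$ and let $x,y\in\mathcal G_n(\mathbf A,\mathbf C_n)$ with $x\ne y$. Then the following are equivalent: (1) $x^{-1}(\top)=y^{-1}(\top)$; (2) $\omega\circ x=\omega\circ y$; (3) there is a finite sequence $z_0=x,z_1,\dots,z_N=y$ of elements of $\mathcal G_n(\mathbf A,\mathbf C_n)$ such that for each $0\le j<N$ there is some $i_j\in\{1,\dots,n-3\}$ with $z_{j+1}=\sigma_{i_j}\circ z_j$ or $z_j=\sigma_{i_j}\circ z_{j+1}$.
   Context: $\mathbf C_n$ is the Heyting algebra whose universe is the chain $\{0<1<\dots<n-1\}$, with lattice operations min and max, $\bot=0$, $\top=n-1$, and $a\to b=\top$ if $a\le b$, $a\to b=b$ if $b<a$. $\mathcal G_n$ is the class of algebras isomorphic to subalgebras of direct powers of $\mathbf C_n$; $\mathcal G_n(\mathbf A,\mathbf C_n)$ is the set of Heyting homomorphisms $\mathbf A\to\mathbf C_n$; $\operatorname{ran}$ denotes image. $\mathbf 2$ is the two-element bounded lattice and $\omega\colon\mathbf C_n\to\{0,1\}$ is the bounded-lattice homomorphism with $\omega(\top)=1$, $\omega(k)=0$ for $k<\top$. For $n\ge4$: for $1\le i\le n-2$, $h_i$ is the endomorphism of $\mathbf C_n$ with $h_i(k)=k+1$ if $i\le k<n-1$ and $h_i(k)=k$ otherwise (so $\operatorname{ran}h_i=C_n\setminus\{i\}$). For $1\le i\le n-3$, $g_i$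 is the partial map with domain $C_n\setminus\{i\}$ given by $g_i(i+1)=i$ and $g_i(k)=k$ for $k\notin\{i,i+1\}$, and $f_i\colon C_n\setminus\{i+1\}\to C_n\setminus\{i\}$ is its inverse; these are partial endomorphisms (homomorphisms from a subalgebra of $\mathbf C_n$ into $\mathbf C_n$). $\Sigma_n=\{f_1,g_1\}\times\dots\times\{f_{n-3},g_{n-3}\}\times\{h_1,\dots,h_{n-2}\}$, whose elements are written $\sigma=(\sigma_1,\dots,\sigma_{n-2})$. For a homomorphism $z$ into $\mathbf C_n$ and a partial map $p$ on $C_n$, $p\circ z$ is defined exactly when $\operatorname{ran}z\subseteq\operatorname{dom}p$. *)

(* Defs.v *)
From mathcomp Require Import all_boot.
Unset Printing Implicit Defensive.

Record HSig := {
  carrier :> Type;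
  hmeet : carrier -> carrier -> carrier;
  hjoin : carrier -> carrier -> carrier;
  himp  : carrier -> carrier -> carrier;
  hbot  : carrier;
  htop  : carrier }.

(* The chain C_n has universe 'I_n = {0,...,n-1}; its operations, on values:
   min, max, 0, n-1, and a -> b = n-1 if a <= b, b otherwise.
   [respects n A v] says v : A -> nat (the values of a map A -> C_n) preserves
   all Heyting operations. *)
Definition respects (n : nat) (A : HSig) (v : A -> nat) : Prop :=
  (forall a b, v (hmeet A a b) = minn (v a) (v b)) /\
  (forall a b, v (hjoin A a b) = maxn (v a) (v b)) /\
  (forall a b, v (himp A a b) = if v a <= v b then n.-1 else v b) /\
  v (hbot A) = 0 /\ v (htop A) = n.-1.

Definition is_hom (n : nat) (A : HSig) (x : A -> 'I_n) : Prop :=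
  @respects n A (fun a => nat_of_ord (x a)).

(* A \in G_n: A is isomorphic to a subalgebra of a direct power C_n^I, i.e.
   there is an injective homomorphism A -> C_n^I (homomorphism = each
   coordinate is a homomorphism). *)
Definition in_Gn (n : nat) (A : HSig) : Prop :=
  exists (I : Type) (e : A -> I -> 'I_n),
    (forall a b, e a = e b -> a = b) /\ (forall i, is_hom n A (fun a => e a i)).

(* Partial maps on C_n (given on values). *)
Record pmap := { pdom : nat -> bool; pfun : nat -> nat }.

Definition h_map (n i : nat) : pmap :=
  {| pdom := fun _ => true;
     pfun := fun k => if (i <= k) && (k < n.-1) then k.+1 else k |}.
Definition g_map (i : nat) : pmap :=
  {| pdom := fun k => k != i;
     pfun := fun k => if k == i.+1 then i else k |}.
Definition f_map (i : nat) : pmap :=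
  {| pdom := fun k => k != i.+1;
     pfun := fun k => if k == i then i.+1 else k |}.

(* An element sigma of Sigma_n: for each 1 <= i <= n-3 a choice between f_i
   (true) and g_i (false) (values of [sig_choice] outside 1..n-3 are ignored),
   and an index 1 <= j <= n-2 selecting h_j as last component. *)
Record Sigma (n : nat) := {
  sig_choice : nat -> bool;
  sig_h : nat;
  sig_h_ok : (1 <= sig_h) && (sig_h <= n - 2) }.

Definition sigma_at (n : nat) (s : Sigma n) (i : nat) : pmap :=
  if i == n - 2 then h_map n (sig_h n s)
  else if sig_choice n s i then f_map i else g_map i.

(* [comp_eq p z w] : w = p o z, where p o z is defined (ran z \subseteq dom p). *)
Definition comp_eq (n : nat) (A : HSig) (p : pmap) (z w : A -> 'I_n) : Prop :=
  (forall a, pdom p (nat_of_ord (z a))) /\ (forall a, nat_of_ord (w a) = pfun p (nat_of_ord (z a))).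

Definition omega (n : nat) (k : 'I_n) : nat := if nat_of_ord k == n.-1 then 1 else 0.

(* Main.v *)
Require Import Defs.
From mathcomp Require Import all_boot zify.
From Stdlib Require Import Classical FunctionalExtensionality.

Definition gval (i v : nat) := if v == i.+1 then i else v.
Lemma gval_lt n i (v : 'I_n) : gval i v < n.
Proof. rewrite /gval; case: eqP => ?; have := ltn_ord v; lia. Qed.
Definition gz n (A : HSig) i (z : A -> 'I_n) : A -> 'I_n := fun a => Ordinal (@gval_lt n i (z a)).

Lemma gval_imp n i p q : p <> i -> q <> i -> i.+2 < n ->
  gval i (if p <= q then n.-1 else q) = if gval i p <= gval i q then n.-1 else gval i q.
Proof. move=> *; rewrite /gval; repeat case: ifP; lia. Qed.

Lemma gz_hom n (A : HSig) i (z : A -> 'I_n) : 4 <= n -> 1 <= i -> i <= n - 3 ->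
  (forall a, nat_of_ord (z a) <> i) -> is_hom n A z -> is_hom n A (@gz n A i z).
Proof.
move=> Hn H1 H2 Hi [Hm [Hj [Hi' [Hb Ht]]]].
rewrite /is_hom /respects /gz /=.
split; [|split; [|split; [|split]]].
- move=> a b; rewrite Hm /gval; repeat case: ifP; lia.
- move=> a b; rewrite Hj /gval; repeat case: ifP; lia.
- move=> a b; rewrite Hi'; apply: gval_imp; [apply: Hi|apply: Hi|lia].
- move: Hb; rewrite /gval; case: ifP; lia.
- move: Ht; rewrite /gval; case: ifP; lia.
Qed.

Lemma comp_top n (A : HSig) (s : Sigma n) i (z w : A -> 'I_n) : 4 <= n -> 1 <= i -> i <= n - 3 ->
  comp_eq n A (sigma_at n s i) z w -> forall a, (nat_of_ord (z a) == n.-1) = (nat_of_ord (w a) == n.-1).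
Proof.
move=> Hn H1 H2; rewrite /sigma_at.
have -> : (i == n - 2) = false by apply/eqP; lia.
case: (sig_choice n s i) => [] [_ Hf] a; rewrite Hf /=; case: ifP => /eqP E;
  apply/eqP/eqP; lia.
Qed.

Definition adj n (s : Sigma n) (A : HSig) (z w : A -> 'I_n) :=
  is_hom n A w /\ exists i, (1 <= i) && (i <= n - 3) /\
     (comp_eq n A (sigma_at n s i) z w \/ comp_eq n A (sigma_at n s i) w z).

Inductive reach n (s : Sigma n) (A : HSig) (z : A -> 'I_n) : (A -> 'I_n) -> Prop :=
| reach0 : is_hom n A z -> reach n s A z z
| reachS w u : reach n s A z w -> adj n s A w u -> reach n s A z u.
Arguments reach {n} s {A}.
Arguments reach0 {n} s {A z}.
Arguments reachS {n s A z w u}.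
Arguments adj {n} s {A}.
Set Implicit Arguments.
Unset Strict Implicit.

Lemma reach_hom n (s : Sigma n) (A : HSig) (z w : A -> 'I_n) : reach s z w -> is_hom n A z /\ is_hom n A w.
Proof. elim=> [H|w' u _ [H1 H2] [H _]]; split=> //. Qed.

Lemma reach_trans n (s : Sigma n) (A : HSig) (z w u : A -> 'I_n) : reach s z w -> reach s w u -> reach s z u.
Proof. move=> H1 H2; elim: H2 H1 => // w' u' _ IH Ha H; exact: reachS (IH H) Ha. Qed.

Lemma adj_sym n (s : Sigma n) (A : HSig) (z w : A -> 'I_n) : is_hom n A z -> adj s z w -> adj s w z.
Proof. move=> Hz [_ [i [Hi [H|H]]]]; split=> //; exists i; split=> //; tauto. Qed.

Lemma reach_sym n (s : Sigma n) (A : HSig) (z w : A -> 'I_n) : reach s z w -> reach s w z.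
Proof.
elim=> [H|w' u Hr IH Ha]; first exact: reach0.
apply: reach_trans IH.
have [_ Hw] := reach_hom Hr.
exact: (reachS (reach0 s (proj1 Ha)) (adj_sym Hw Ha)).
Qed.

Lemma reach_top n (s : Sigma n) (A : HSig) (z w : A -> 'I_n) : 4 <= n -> reach s z w ->
  forall a, (nat_of_ord (z a) == n.-1) = (nat_of_ord (w a) == n.-1).
Proof.
move=> Hn; elim=> // w' u _ IH [_ [i [/andP[H1 H2] [H|H]]]] a; rewrite IH.
  exact: (comp_top _ _ _ _ _ _ Hn H1 H2 H a).
by rewrite (comp_top _ _ _ _ _ _ Hn H1 H2 H a).
Qed.

Lemma gstep n (s : Sigma n) (A : HSig) i (z : A -> 'I_n) : 4 <= n -> 1 <= i -> i <= n - 3 ->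
  (forall a, nat_of_ord (z a) <> i) -> is_hom n A z -> reach s z (@gz n A i z).
Proof.
move=> Hn H1 H2 Hi Hz.
apply: reachS (reach0 s Hz) _; split; first exact: gz_hom.
exists i; split; first by rewrite H1 H2.
rewrite /sigma_at.
have -> : (i == n - 2) = false by apply/eqP; lia.
case: (sig_choice n s i).
- right; split=> a /=; rewrite /gval; have := Hi a; repeat case: ifP; lia.
- left; split=> a //=; apply/eqP; exact: Hi.
Qed.

Lemma slide n (s : Sigma n) (A : HSig) (z : A -> 'I_n) d : 4 <= n -> forall p q, p + d = q ->
  1 <= p -> q <= n - 2 -> is_hom n A z ->
  (forall a, ~ (p <= z a < q)) ->
  exists w, reach s z w /\ forall a, nat_of_ord (w a) = if nat_of_ord (z a) == q then p else z a.
Proof.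
move=> Hn; elim: d z => [|d IH] z p q Hq Hp Hqn Hz Hg.
  exists z; split; first exact: reach0.
  move=> a; case: eqP => //; lia.
have Hi1 : 1 <= q.-1 by lia.
have Hi2 : q.-1 <= n - 3 by lia.
have Hi3 : forall a, nat_of_ord (z a) <> q.-1 by move=> a; have := Hg a; lia.
have Hs := gstep s Hn Hi1 Hi2 Hi3 Hz.
have [_ Hz1] := reach_hom Hs.
have [w [Hw Hwv]] := IH (@gz n A q.-1 z) p q.-1 ltac:(lia) Hp ltac:(lia) Hz1
  ltac:(move=> a /=; have := Hg a; rewrite /gval; case: ifP; lia).
exists w; split; first exact: reach_trans Hs Hw.
move=> a; rewrite Hwv /= /gval; have := Hg a; repeat case: ifP; lia.
Qed.

Definition inv_I n (A : HSig) k (z : A -> 'I_n) :=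
  exists m, m <= k /\ (forall u, 1 <= u <= m -> exists a, nat_of_ord (z a) = u) /\
    (forall a, ~ (m < z a <= k)).

Lemma canon n (s : Sigma n) (A : HSig) (z : A -> 'I_n) k : 4 <= n -> k <= n - 2 -> is_hom n A z ->
  exists w, reach s z w /\ inv_I k w.
Proof.
move=> Hn; elim: k => [|k IH] Hk Hz.
  exists z; split; first exact: reach0.
  exists 0; split=> //; split; [lia| move=> a; lia].
have [w [Hw [m [Hmk [Hm Hg]]]]] := IH ltac:(lia) Hz.
have [_ Hwh] := reach_hom Hw.
case: (classic (exists a, nat_of_ord (w a) = k.+1)) => [[a0 Ha0]|Hno].
  have [Emk|Lmk] : m = k \/ m < k by lia.
    exists w; split=> //; exists k.+1; split=> //; split.
      move=> u Hu; case: (u =P k.+1) => [->|Hne]; first by exists a0.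
      apply: Hm; lia.
    move=> a; lia.
  have [w' [Hw' Hv]] := slide s (z:=w) (d:=k-m) Hn (p:=m.+1) (q:=k.+1) ltac:(lia) ltac:(lia) ltac:(lia) Hwh
     ltac:(move=> a; have := Hg a; lia).
  exists w'; split; first exact: reach_trans Hw Hw'.
  exists m.+1; split; first lia; split.
    move=> u Hu; case: (u =P m.+1) => [->|Hne].
      by exists a0; rewrite Hv Ha0 eqxx.
    have [a Ha] := Hm u ltac:(lia); exists a; rewrite Hv Ha; case: ifP; lia.
  move=> a; rewrite Hv; have := Hg a; case: ifP; lia.
exists w; split=> //; exists m; split; first lia; split=> //.
move=> a Ha; apply: (Hg a); case: (nat_of_ord (w a) =P k.+1) => E.
  by case: Hno; exists a.
lia.
Qed.

Lemma le_top n (A : HSig) (z : A -> 'I_n) : is_hom n A z -> forall a b,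
  (nat_of_ord (z a) <= z b) = (nat_of_ord (z (himp A a b)) == n.-1).
Proof.
move=> [_ [_ [Hi _]]] a b; rewrite Hi; have := ltn_ord (z a); case: (leqP (z a) (z b)).
  by move=> _; rewrite eqxx.
move=> H1 H2; apply/esym/eqP; lia.
Qed.

Lemma ord_iff n (A : HSig) (z w : A -> 'I_n) : is_hom n A z -> is_hom n A w ->
  (forall a, (nat_of_ord (z a) == n.-1) = (nat_of_ord (w a) == n.-1)) ->
  forall a b, (nat_of_ord (z a) <= z b) = (nat_of_ord (w a) <= w b).
Proof. move=> Hz Hw Ht a b; by rewrite (le_top Hz) (le_top Hw) Ht. Qed.

Lemma dc n (A : HSig) (z : A -> 'I_n) : inv_I (n - 2) z ->
  forall a u, 1 <= u <= z a -> z a <= n - 2 -> exists b, nat_of_ord (z b) = u.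
Proof.
move=> [m [Hm [H1 H2]]] a u Hu Ha; apply: H1; have := H2 a; lia.
Qed.

Lemma step_dir n (A : HSig) (z w : A -> 'I_n) : 4 <= n -> is_hom n A z -> is_hom n A w ->
  inv_I (n - 2) z -> inv_I (n - 2) w ->
  (forall a, (nat_of_ord (z a) == n.-1) = (nat_of_ord (w a) == n.-1)) ->
  forall v, v.+1 <= n - 2 ->
  (forall u, u <= v -> forall a, nat_of_ord (z a) = u <-> nat_of_ord (w a) = u) ->
  forall a, nat_of_ord (z a) = v.+1 -> nat_of_ord (w a) = v.+1.
Proof.
move=> Hn Hz Hw Iz Iw Ht v Hv IH a Ha.
have Ho := ord_iff Hz Hw Ht.
have [b Hb] : exists b, nat_of_ord (z b) = v.
  case: (v =P 0) => [->|Hv0]; first by exists (hbot A); case: Hz => [_ [_ [_ [? _]]]].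
  apply: (dc Iz (a := a)); lia.
have Hwb : nat_of_ord (w b) = v by apply/(IH v (leqnn v)).
have Hgt : v < w a.
  have := Ho a b; rewrite Ha Hb Hwb; case: leqP => //; lia.
have Hnt : nat_of_ord (w a) != n.-1.
  by rewrite -Ht Ha; apply/eqP; lia.
have Hwa : nat_of_ord (w a) <= n - 2 by have := ltn_ord (w a); lia.
have [c Hc] := dc Iw (a := a) (u := v.+1) ltac:(lia) Hwa.
case: (ltngtP (w a) v.+1) => // H; first lia.
have := Ho a c; rewrite Ha Hc.
have : ~~ (nat_of_ord (w a) <= v.+1) by rewrite -ltnNge.
move/negbTE => -> Hzc.
have Hzc' : nat_of_ord (z c) <= v by lia.
have := proj1 (IH _ Hzc' c) erefl; lia.
Qed.

Lemma uniq_canon n (A : HSig) (z w : A -> 'I_n) : 4 <= n -> is_hom n A z -> is_hom n A w ->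
  inv_I (n - 2) z -> inv_I (n - 2) w ->
  (forall a, (nat_of_ord (z a) == n.-1) = (nat_of_ord (w a) == n.-1)) -> z = w.
Proof.
move=> Hn Hz Hw Iz Iw Ht.
have Ht' : forall a, (nat_of_ord (w a) == n.-1) = (nat_of_ord (z a) == n.-1) by move=> a; rewrite Ht.
have Q : forall v, v <= n - 2 -> forall u, u <= v -> forall a, nat_of_ord (z a) = u <-> nat_of_ord (w a) = u.
  elim=> [_ u Hu a|v IH Hv u Hu a].
    have -> : u = 0 by lia.
    have Ho := ord_iff Hz Hw Ht a (hbot A).
    case: Hz => [_ [_ [_ [Hzb _]]]]; case: Hw => [_ [_ [_ [Hwb _]]]].
    move: Ho; rewrite Hzb Hwb; split=> E.
      by move: Ho; rewrite E /=; lia.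
    by move: Ho; rewrite E /=; lia.
  case: (ltngtP u v.+1) => H; [|lia|].
    apply: (IH ltac:(lia)); lia.
  subst u; split.
    apply: (step_dir Hn Hz Hw Iz Iw Ht Hv) => u' Hu' b; apply: IH; lia.
  apply: (step_dir Hn Hw Hz Iw Iz Ht' Hv) => u' Hu' b.
  rewrite (IH ltac:(lia) u' Hu' b); tauto.
apply: functional_extensionality => a; apply: val_inj => /=.
case: (nat_of_ord (z a) =P n.-1) => E.
  by move: (Ht a); rewrite E eqxx => /esym/eqP ->.
have Hza : nat_of_ord (z a) <= n - 2 by have := ltn_ord (z a); lia.
by apply/esym/(Q _ Hza _ (leqnn _)).
Qed.

Lemma reach_P3 n (s : Sigma n) (A : HSig) (x y : A -> 'I_n) : reach s x y ->
  exists (N : nat) (z : nat -> A -> 'I_n),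
      z 0 = x /\ z N = y /\ (forall j, j <= N -> is_hom n A (z j)) /\
      (forall j, j < N -> exists i, (1 <= i) && (i <= n - 3) /\
         (comp_eq n A (sigma_at n s i) (z j) (z j.+1) \/
          comp_eq n A (sigma_at n s i) (z j.+1) (z j))).
Proof.
elim=> [H|w u _ [N [zs [H0 [HN [Hh Hs]]]]] [Hu Ha]].
  by exists 0, (fun _ => x); split=> //; split=> //; split=> // j; lia.
exists N.+1, (fun j => if j <= N then zs j else u); split; first by [].
split; first by rewrite ltnn.
split.
  move=> j Hj; case: ifP => Hj'; [exact: Hh|exact: Hu].
move=> j Hj; rewrite ltnS in Hj.
case: (ltngtP j N) Hj => // H _.
  by apply: Hs.
by subst j; rewrite HN.
Qed.

Theorem lemma2p3 (n : nat) (Hn : 4 <= n) (s : Sigma n) (A : HSig)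
  (HA : in_Gn n A) (x y : A -> 'I_n) (Hx : is_hom n A x) (Hy : is_hom n A y)
  (Hxy : x <> y) :
  let P1 := forall a, (nat_of_ord (x a) == n.-1) = (nat_of_ord (y a) == n.-1) in
  let P2 := forall a, omega n (x a) = omega n (y a) in
  let P3 := exists (N : nat) (z : nat -> A -> 'I_n),
      z 0 = x /\ z N = y /\ (forall j, j <= N -> is_hom n A (z j)) /\
      (forall j, j < N -> exists i, (1 <= i) && (i <= n - 3) /\
         (comp_eq n A (sigma_at n s i) (z j) (z j.+1) \/
          comp_eq n A (sigma_at n s i) (z j.+1) (z j))) in
  (P1 <-> P2) /\ (P2 <-> P3).
Proof.
move=> P1 P2 P3.
have E12 : P1 <-> P2.
  rewrite /P1 /P2 /omega; split=> H a; have := H a.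
    by move=> ->.
  by do 2 case: eqP.
split=> //; split.
  move/E12 => H1.
  have [cx [Rx Ix]] := canon s (z := x) (k := n - 2) Hn (leqnn _) Hx.
  have [cy [Ry Iy]] := canon s (z := y) (k := n - 2) Hn (leqnn _) Hy.
  have [_ Hcx] := reach_hom Rx; have [_ Hcy] := reach_hom Ry.
  have Tx := reach_top Hn Rx; have Ty := reach_top Hn Ry.
  have E : cx = cy.
    apply: uniq_canon Hn Hcx Hcy Ix Iy _ => a; by rewrite -Tx -Ty H1.
  subst cy; apply: reach_P3; exact: reach_trans Rx (reach_sym Ry).
move=> [N [zs [H0 [HN [Hh Hs]]]]]; apply/E12.
have K : forall j, j <= N -> forall a, (nat_of_ord (x a) == n.-1) = (nat_of_ord (zs j a) == n.-1).
  elim=> [_ a|j IH Hj a]; first by rewrite H0.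
  have [i [/andP[Hi1 Hi2] [H|H]]] := Hs j Hj; rewrite (IH (ltnW Hj)).
    exact: (comp_top _ _ _ _ _ _ Hn Hi1 Hi2 H a).
  by rewrite (comp_top _ _ _ _ _ _ Hn Hi1 Hi2 H a).
by move=> a; rewrite (K N (leqnn N)) HN.
Qed.
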